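(* Let $(G,\cdot)$ be a loop with identity $e$ and $(H,\cdot)$ a non-trivial subloop such that $(xs\cdot z)s=x(sz\cdot s)$ for all $x,z\in G$, $s\in H$. Then the following are equivalent: (a) $J_\rho$ is a second Smarandache semi-automorphism of $G_H$, i.e. $eJ_\rho=e$ and $(sy\cdot s)^\rho=(s^\rho\cdot y^\rho)s^\rho$ for all $y\in G$, $s\in H$; (b) $sy\cdot y^\rho=s$ for all $y\in G$ and $s\in H$.
   Context: Juxtaposition binds more tightly than $\cdot$. $x^\rho$ is the right inverse of $x$ ($xx^\rho=e$), and $J_\rho:G\to G$ is the map $x\mapsto x^\rho$. A second Smarandache semi-automorphism of $G_H$ is a bijection $T$ of $G$ with $HT=H$, $eT=e$ and $(sy\cdot s)T=(sT\cdot yT)sT$ for all $y\in G$, $s\in H$. *)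

(* Defs.v *)
Definition is_loop {G : Type} (mul : G -> G -> G) (e : G) : Prop :=
  (forall x, mul e x = x /\ mul x e = x) /\
  (forall a b, exists! x, mul a x = b) /\
  (forall a b, exists! y, mul y a = b).

Definition is_subloop {G : Type} (mul : G -> G -> G) (e : G) (H : G -> Prop) : Prop :=
  H e /\
  (forall a b, H a -> H b -> H (mul a b)) /\
  (forall a b x, H a -> H b -> mul a x = b -> H x) /\
  (forall a b y, H a -> H b -> mul y a = b -> H y).

Definition nontrivial {G : Type} (e : G) (H : G -> Prop) : Prop :=
  exists s, H s /\ s <> e.

Definition bijective_map {G : Type} (T : G -> G) : Prop :=
  (forall x y, T x = T y -> x = y) /\ (forall y, exists x, T x = y).

Definition second_S_semi_automorphism {G : Type} (mul : G -> G -> G) (e : G)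
    (H : G -> Prop) (T : G -> G) : Prop :=
  bijective_map T /\
  (forall y, H y <-> exists x, H x /\ T x = y) /\
  T e = e /\
  (forall y s, H s ->
     T (mul (mul s y) s) = mul (mul (T s) (T y)) (T s)).

(* Main.v *)
Require Import Defs.

Theorem theorem3p5 (G : Type) (mul : G -> G -> G) (e : G) (H : G -> Prop)
  (rho : G -> G)
  (HG : is_loop mul e)
  (HH : is_subloop mul e H)
  (Hnt : nontrivial e H)
  (Hrho : forall x, mul x (rho x) = e)
  (Hid : forall x z s, H s ->
     mul (mul (mul x s) z) s = mul x (mul (mul s z) s)) :
  second_S_semi_automorphism mul e H rho <->
  (forall y s, H s -> mul (mul s y) (rho y) = s).
Proof.
  destruct HG as [Hun [Hld Hrd]].
  destruct HH as [He [Hmul [Hl Hr]]].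
  assert (rc : forall a b c, mul a c = mul b c -> a = b).
  { intros a b c E. destruct (Hrd c (mul b c)) as [y [_ U]].
    rewrite <- (U a E). apply U. reflexivity. }
  assert (lc : forall a b c, mul c a = mul c b -> a = b).
  { intros a b c E. destruct (Hld c (mul c b)) as [y [_ U]].
    rewrite <- (U a E). apply U. reflexivity. }
  assert (Hrs : forall s, H s -> H (rho s)).
  { intros s Hs. apply (Hl s e (rho s) Hs He (Hrho s)). }
  assert (RIP : forall x s, H s -> mul (mul x s) (rho s) = x).
  { intros x s Hs. apply (rc _ _ s).
    rewrite Hid by exact Hs. rewrite Hrho. destruct (Hun s) as [-> _]. reflexivity. }
  assert (KEY : forall y s, H s ->
     mul (mul (mul s y) (rho y)) (rho s) =
     mul (mul (mul s y) s) (mul (mul (rho s) (rho y)) (rho s))).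
  { intros y s Hs. rewrite <- Hid by (apply Hrs; exact Hs).
    rewrite (RIP (mul s y) s Hs). reflexivity. }
  split.
  - intros [_ [_ [_ A]]] y s Hs.
    apply (rc _ _ (rho s)). rewrite KEY by exact Hs.
    rewrite <- (A y s Hs). rewrite !Hrho. reflexivity.
  - intros B. split; [|split; [|split]].
    + split.
      * intros x y E. apply (rc _ _ (rho x)). rewrite Hrho. rewrite E. rewrite Hrho. reflexivity.
      * intros y. destruct (Hrd y e) as [x [Ex _]]. exists x.
        apply (lc _ _ x). rewrite Hrho. symmetry. exact Ex.
    + intros y. split.
      * intros Hy. destruct (Hrd y e) as [x [Ex _]]. exists x. split.
        -- apply (Hr y e x Hy He Ex).
        -- apply (lc _ _ x). rewrite Hrho. symmetry. exact Ex.
      * intros [x [Hx <-]]. apply Hrs. exact Hx.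
    + apply (lc _ _ e). rewrite Hrho. destruct (Hun e) as [_ ->]. reflexivity.
    + intros y s Hs. apply (lc _ _ (mul (mul s y) s)). rewrite Hrho.
      rewrite <- KEY by exact Hs. rewrite B by exact Hs. symmetry. apply Hrho.
Qed.
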